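(* Let $m,n\ge 1$, $A=[a_{ij}]$ an $m\times n$ matrix with entries in $\mathbb{R}\cup\{-\infty\}$, and $B=[b_{ji}]$ an $n\times m$ matrix with entries in $\mathbb{R}\cup\{+\infty\}$. Let $\lambda\in\mathbb{R}$ be an eigenvalue of the bipartite min-max-plus system $\mathcal{M}$ defined by $A,B$, let $A_\lambda=-\lambda\otimes A$, $B_\lambda=-\lambda\otimes B$, and define the sequence $x^*(l+1)=\mathcal{N}(x^*(l))$ for $l=0,1,2,\dots$ from an initial state vector $x^*(0)$. Suppose $x^*(r)=x^*(s)$ for some integers $r>s\ge 0$ and let $v=x^*(s)\oplus x^*(s+1)\oplus\cdots\oplus x^*(r-1)$. Then $\mathcal{N}(v)\ge v$ (componentwise).
   Context: Notation: $\epsilon=-\infty$, $\tau=+\infty$. For scalars, $r\oplus s=\max\{r,s\}$, $r\oplus' s=\min\{r,s\}$, $r\otimes s=r+s$; $\oplus$ of vectors is the componentwise maximum. For a scalar $\alpha\in\mathbb{R}$ and a matrix or vector $X$, $\alpha\otimes X$ adds $\alpha$ to every entry (infinite entries are unchanged). Max-plus product: $(A\otimes w)_i=\max_{1\le j\le n}(a_{ij}+w_j)$; min-plus product: $(B\otimes' u)_j=\min_{1\le i\le m}(b_{ji}+u_i)$. Convention for infinite sums: $-\infty+x=-\infty$ for $x\ne+\infty$, $+\infty+x=+\infty$ for $x\ne-\infty$, and in max-plus products $-\infty$ is absorbing while in min-plus products $+\infty$ is absorbing. For $v=\begin{pmatrix}u\\ w\end{pmatrix}$ ($u$ of length $m$,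 $w$ of length $n$): $\mathcal{M}(v)=\begin{pmatrix}A\otimes w\\ B\otimes' u\end{pmatrix}$ and $\mathcal{N}(v)=\begin{pmatrix}A_\lambda\otimes w\\ B_\lambda\otimes' u\end{pmatrix}$. A real number $\lambda$ is an eigenvalue of the system $x(l+1)=\mathcal{M}(x(l))$ if there exists $v\in\mathbb{R}^{m+n}$ with $\mathcal{M}(v)=\lambda\otimes v$. *)

(* Defs.v *)
From HB Require Import structures.
From mathcomp Require Import all_boot all_order all_algebra.
From mathcomp Require Import all_classical all_reals.
From mathcomp Require Import ereal.
Set Implicit Arguments. Unset Strict Implicit. Unset Printing Implicit Defensive.
Import Order.TTheory GRing.Theory Num.Theory.
Local Open Scope ring_scope.
Local Open Scope ereal_scope.

(* Bipartite min-max-plus systems over the extended reals \bar R.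
   epsilon = -oo, tau = +oo.  A state vector v = (u; w) with u of length m
   and w of length n is represented as a pair of functions. *)

Definition state (R : realType) (m n : nat) : Type :=
  (('I_m -> \bar R) * ('I_n -> \bar R))%type.

Definition maxplus (R : realType) (m n : nat) (A : 'M[\bar R]_(m, n))
  (w : 'I_n -> \bar R) (i : 'I_m) : \bar R :=
  \big[Order.max/-oo]_(j < n) (A i j + w j).

Definition minplus (R : realType) (m n : nat) (B : 'M[\bar R]_(n, m))
  (u : 'I_m -> \bar R) (j : 'I_n) : \bar R :=
  \big[Order.min/+oo]_(i < m) (B j i + u i).

Definition Mop (R : realType) (m n : nat) (A : 'M[\bar R]_(m, n))
  (B : 'M[\bar R]_(n, m)) (v : state R m n) : state R m n :=
  (maxplus A v.2, minplus B v.1).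

Definition escale (R : realType) (p q : nat) (alpha : R)
  (X : 'M[\bar R]_(p, q)) : 'M[\bar R]_(p, q) :=
  \matrix_(i, j) (alpha%:E + X i j).

Definition Nop (R : realType) (m n : nat) (A : 'M[\bar R]_(m, n))
  (B : 'M[\bar R]_(n, m)) (lambda : R) : state R m n -> state R m n :=
  Mop (escale (- lambda)%R A) (escale (- lambda)%R B).

Definition is_eigenvalue (R : realType) (m n : nat) (A : 'M[\bar R]_(m, n))
  (B : 'M[\bar R]_(n, m)) (lambda : R) : Prop :=
  exists (u : 'I_m -> R) (w : 'I_n -> R),
    Mop A B (fun i => (u i)%:E, fun j => (w j)%:E)
    = (fun i => (lambda + u i)%R%:E, fun j => (lambda + w j)%R%:E).

Definition orbitN (R : realType) (m n : nat) (A : 'M[\bar R]_(m, n))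
  (B : 'M[\bar R]_(n, m)) (lambda : R) (x0 : state R m n) (l : nat)
  : state R m n :=
  iter l (Nop A B lambda) x0.

Definition orbit_max (R : realType) (m n : nat) (x : nat -> state R m n)
  (s r : nat) : state R m n :=
  (fun i => \big[Order.max/-oo]_(s <= l < r) (x l).1 i,
   fun j => \big[Order.max/-oo]_(s <= l < r) (x l).2 j).

Definition state_le (R : realType) (m n : nat) (x y : state R m n) : Prop :=
  (forall i, x.1 i <= y.1 i) /\ (forall j, x.2 j <= y.2 j).

(* Main.v *)
Require Import Defs.
From HB Require Import structures.
From mathcomp Require Import all_boot all_order all_algebra.
From mathcomp Require Import all_classical all_reals.
From mathcomp Require Import ereal.
From mathcomp Require Import zify.
Import Order.TTheory.
Local Open Scope ring_scope.
Local Open Scope ereal_scope.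

Lemma Nop_mono (R : realType) (m n : nat) (A : 'M[\bar R]_(m, n))
  (B : 'M[\bar R]_(n, m)) (lambda : R) (x y : state R m n) :
  state_le x y -> state_le (Nop A B lambda x) (Nop A B lambda y).
Proof.
case=> h1 h2; split => i /=.
  by apply: le_bigmax2 => j _; apply: leeD2l.
by apply: le_bigmin2 => j _; apply: leeD2l.
Qed.

Theorem theorem3 (R : realType) (m n : nat) (hm : (0 < m)%N) (hn : (0 < n)%N)
  (A : 'M[\bar R]_(m, n)) (B : 'M[\bar R]_(n, m))
  (hA : forall i j, A i j != +oo) (hB : forall j i, B j i != -oo)
  (lambda : R) (heig : is_eigenvalue A B lambda)
  (x0u : 'I_m -> R) (x0w : 'I_n -> R) (r s : nat) (hsr : (s < r)%N)
  (hcyc : orbitN A B lambda (fun i => (x0u i)%:E, fun j => (x0w j)%:E) r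
          = orbitN A B lambda (fun i => (x0u i)%:E, fun j => (x0w j)%:E) s) :
  let x := orbitN A B lambda (fun i => (x0u i)%:E, fun j => (x0w j)%:E) in
  let v := orbit_max x s r in
  state_le v (Nop A B lambda v).
Proof.
move=> x v.
have xv : forall l, (s <= l < r)%N -> state_le (x l) v.
  move=> l hl; split => i; rewrite /v /orbit_max /=;
  by apply: (le_bigmax_seq _ l) => //; rewrite mem_index_iota.
have xN : forall l, (s <= l < r)%N -> state_le (x l) (Nop A B lambda v).
  move=> l /andP[hsl hlr].
  have [k hk ->] : exists2 k, (s <= k < r)%N & x l = Nop A B lambda (x k).
    move: hsl; rewrite leq_eqVlt => /orP[/eqP el|hsl].
      exists r.-1.
        by apply/andP; split; lia.
      by rewrite -el /x -hcyc /orbitN -iterS prednK //; lia.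
    exists l.-1.
      by apply/andP; split; lia.
    by rewrite /x /orbitN -iterS prednK //; lia.
  by apply: Nop_mono; apply: xv.
split => i; rewrite {1}/v /orbit_max /= big_seq_cond;
  (apply: bigmax_le; first exact: leNye);
  move=> l /andP[hl _]; rewrite mem_index_iota in hl; by case: (xN l hl).
Qed.
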